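(* Let $E$ be a directed graph, let $R$ be a commutative ring with identity, and let $\{p_v, s_e, s_{e^*}\}$ be the universal generating Leavitt $E$-family in the Leavitt path algebra $L_R(E)$. Let $V\subset E^0$ and set \[ M:=\operatorname{span}_R\{s_{\mu}s_{\nu^*} :\mu,\nu\in E^*,\ r(\mu)\in V\},\qquad M^*:=\operatorname{span}_R\{s_{\mu}s_{\nu^*} :\mu,\nu\in E^*,\ r(\nu)\in V\}. \] Let $MM^*$ denote the $R$-span of all products $mn$ with $m\in M$, $n\in M^*$, and $M^*M$ the $R$-span of all products $nm$ with $n\in M^*$, $m\in M$ (products taken in $L_R(E)$). Then: (1) $MM^*$ is an $R$-subalgebra of $L_R(E)$; (2) $MM^*=\operatorname{span}_R\{s_\mu s_{\nu^*}:\mu,\nu\in E^*,\ r(\mu), r(\nu)\in V\}$, and $M^*M$ is a (two-sided) ideal of $L_R(E)$ containing $MM^*$; (3) with actions given by multiplication in $L_R(E)$, $M$ is an $MM^*$--$M^*M$-bimodule and $M^*$ is an $M^*M$--$MM^*$-bimodule; (4) there are bimodule homomorphisms $\Psi: M\otimes_{M^*M}M^*\to MM^*$ with $\Psi(m\otimes n)=mn$ and $\Phi: M^*\otimes_{MM^*}M\to M^*M$ with $\Phi(n\otimes m)=nm$ such that $(MM^*, M^*M, M, M^*, \Psi,\Phi)$ is a surjective Morita context; that is, $\Psi$ and $\Phi$ are surjective and $m\,\Phi(n\otimes m')=\Psi(m\otimes n)\,m'$ and $n\,\Psi(m\otimes n')=\Phi(n\otimes m)\,n'$ for all $m,m'\in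 M$, $n,n'\in M^*$.
   Context: A directed graph $E=(E^0,E^1,r,s)$ has countable vertex set $E^0$, countable edge set $E^1$ and range and source maps $r,s:E^1\to E^0$. A vertex $v$ is singular if $r^{-1}(v)$ is empty or infinite. A finite path is a finite sequence of edges $\mu=\mu_1\cdots\mu_n$ with $s(\mu_i)=r(\mu_{i+1})$; vertices are paths of length $0$; $E^*$ is the set of finite paths; $r(\mu)=r(\mu_1)$, $s(\mu)=s(\mu_n)$ (for a vertex $v$, $r(v)=s(v)=v$). For an $R$-algebra $A$, a Leavitt $E$-family in $A$ is a set $\{P_v,S_e,S_{e^*}: v\in E^0, e\in E^1\}\subset A$ with the $P_v$ mutually orthogonal idempotents and (L1) $P_{r(e)}S_e=S_e=S_eP_{s(e)}$, $P_{s(e)}S_{e^*}=S_{e^*}=S_{e^*}P_{r(e)}$; (L2) $S_{e^*}S_f=\delta_{e,f}P_{s(e)}$; (L3) $P_v=\sum_{r(e)=v}S_eS_{e^*}$ for every non-singular $v$. The Leavitt path algebra $L_R(E)$ is the universal $R$-algebra generated by a Leavitt $E$-family $\{p_v,s_e,s_{e^*}\}$. For $\mu=\mu_1\cdots\mu_n\in E^*$, $s_\mu=s_{\mu_1}\cdots s_{\mu_n}$ and $s_{\mu^*}=s_{\mu_n^*}\cdots s_{\mu_1^*}$, with $s_v=s_{v^*}=p_v$ for a vertex $v$. *)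

(* Defs.v *)
From HB Require Import structures.
From mathcomp Require Import all_boot all_algebra.
Set Implicit Arguments. Unset Strict Implicit. Unset Printing Implicit Defensive.
Import GRing.Theory.
Local Open Scope ring_scope.

(* (Possibly trivial) associative R-algebras.  MathComp's algType requires a *)
(* non-trivial ring, so an R-algebra is given here as a (pz) ring A together *)
(* with a scalar action sc : R -> A -> A satisfying the algebra axioms.      *)
Record is_Ralg (R : comPzRingType) (A : pzRingType) (sc : R -> A -> A) : Prop := {
  ralg_scale1 : forall x, sc 1 x = x;
  ralg_scaleA : forall a b x, sc a (sc b x) = sc (a * b) x;
  ralg_scaleDl : forall a b x, sc (a + b) x = sc a x + sc b x;
  ralg_scaleDr : forall a x y, sc a (x + y) = sc a x + sc a y;
  ralg_scaleAl : forall a x y, sc a (x * y) = sc a x * y;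
  ralg_scaleAr : forall a x y, sc a (x * y) = x * sc a y }.

Inductive rspan (R : comPzRingType) (A : pzRingType) (sc : R -> A -> A)
    (X : A -> Prop) : A -> Prop :=
  | rspan0 : rspan sc X 0
  | rspan_base x : X x -> rspan sc X x
  | rspanD x y : rspan sc X x -> rspan sc X y -> rspan sc X (x + y)
  | rspanZ a x : rspan sc X x -> rspan sc X (sc a x).

Definition prodspan (R : comPzRingType) (A : pzRingType) (sc : R -> A -> A)
    (X Y : A -> Prop) : A -> Prop :=
  rspan sc (fun z => exists x y, [/\ X x, Y y & z = x * y]).

Definition is_subalgebra_of (R : comPzRingType) (A : pzRingType)
    (sc : R -> A -> A) (L X : A -> Prop) : Prop :=
  [/\ forall x, X x -> L x, X 0,
      forall x y, X x -> X y -> X (x + y),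
      forall a x, X x -> X (sc a x) &
      forall x y, X x -> X y -> X (x * y)].

Definition is_ideal_of (R : comPzRingType) (A : pzRingType)
    (sc : R -> A -> A) (L X : A -> Prop) : Prop :=
  [/\ forall x, X x -> L x, X 0,
      forall x y, X x -> X y -> X (x + y),
      forall a x, X x -> X (sc a x) &
      forall x y, L x -> X y -> X (x * y) /\ X (y * x)].

(* rg = range map r, sr = source map s.                                     *)
Section Graph.
Variables (E0 E1 : countType) (rg sr : E1 -> E0).

(* Leavitt E-family in an R-algebra A.  (L3) is required for every          *)
(* non-singular vertex v, i.e. r^{-1}(v) finite and non-empty; s is then a   *)
(* duplicate-free enumeration of r^{-1}(v).                                  *)
Record leavitt_family (A : pzRingType) (P : E0 -> A) (S Ss : E1 -> A) : Prop := {
  lf_idem : forall v, P v * P v = P v;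
  lf_orth : forall v w, v != w -> P v * P w = 0;
  lf_L1a : forall e, P (rg e) * S e = S e;
  lf_L1b : forall e, S e * P (sr e) = S e;
  lf_L1c : forall e, P (sr e) * Ss e = Ss e;
  lf_L1d : forall e, Ss e * P (rg e) = Ss e;
  lf_L2 : forall e f, Ss e * S f = (if e == f then P (sr e) else 0);
  lf_L3 : forall (v : E0) (s : seq E1), uniq s -> s != [::] ->
            (forall e, (rg e == v) = (e \in s)) ->
            P v = \sum_(e <- s) S e * Ss e }.

(* Finite paths: a pair (v, es).  If es = [::] the path is the vertex v;     *)
(* otherwise es = mu_1 ... mu_n with s(mu_i) = r(mu_{i+1}) and v = r(mu_1).   *)
Definition fpath := (E0 * seq E1)%type.

Definition is_fpath (p : fpath) : bool :=
  match p.2 with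
  | [::] => true
  | e :: es => (p.1 == rg e) && path (fun a b => sr a == rg b) e es
  end.

Definition fpath_rg (p : fpath) : E0 := p.1.

Definition s_path (A : pzRingType) (P : E0 -> A) (S : E1 -> A) (p : fpath) : A :=
  if p.2 is [::] then P p.1 else \prod_(e <- p.2) S e.
Definition s_pathstar (A : pzRingType) (P : E0 -> A) (Ss : E1 -> A) (p : fpath) : A :=
  if p.2 is [::] then P p.1 else \prod_(e <- rev p.2) Ss e.

Inductive gen_alg (R : comPzRingType) (A : pzRingType) (sc : R -> A -> A)
    (P : E0 -> A) (S Ss : E1 -> A) : A -> Prop :=
  | gen_P v : gen_alg sc P S Ss (P v)
  | gen_S e : gen_alg sc P S Ss (S e)
  | gen_Ss e : gen_alg sc P S Ss (Ss e)
  | gen_0 : gen_alg sc P S Ss 0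
  | gen_D x y : gen_alg sc P S Ss x -> gen_alg sc P S Ss y -> gen_alg sc P S Ss (x + y)
  | gen_Z a x : gen_alg sc P S Ss x -> gen_alg sc P S Ss (sc a x)
  | gen_M x y : gen_alg sc P S Ss x -> gen_alg sc P S Ss y -> gen_alg sc P S Ss (x * y).

(* Universal property: the subalgebra generated by (P,S,Ss) inside A is the  *)
(* universal R-algebra generated by a Leavitt E-family, i.e. it is L_R(E)    *)
(* with its generators.  Targets B range over unital R-algebras, which       *)
(* suffices since every R-algebra embeds into its unitization.               *)
Definition leavitt_universal (R : comPzRingType) (A : pzRingType)
    (sc : R -> A -> A) (P : E0 -> A) (S Ss : E1 -> A) : Prop :=
  forall (B : pzRingType) (scB : R -> B -> B) (PB : E0 -> B) (SB SsB : E1 -> B),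
    is_Ralg scB -> leavitt_family PB SB SsB ->
    exists phi : A -> B,
      [/\ forall x y, gen_alg sc P S Ss x -> gen_alg sc P S Ss y ->
            phi (x + y) = phi x + phi y,
          forall a x, gen_alg sc P S Ss x -> phi (sc a x) = scB a (phi x),
          forall x y, gen_alg sc P S Ss x -> gen_alg sc P S Ss y ->
            phi (x * y) = phi x * phi y,
          forall v, phi (P v) = PB v &
          forall e, phi (S e) = SB e /\ phi (Ss e) = SsB e].

Definition mono_span (R : comPzRingType) (A : pzRingType) (sc : R -> A -> A)
    (P : E0 -> A) (S Ss : E1 -> A) (Q : fpath -> fpath -> Prop) : A -> Prop :=
  rspan sc (fun x => exists mu nu : fpath,
     [/\ is_fpath mu, is_fpath nu, Q mu nu & x = s_path P S mu * s_pathstar P Ss nu]).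

End Graph.

(* Tensor products M (x)_C N of R-modules M, N (subsets of A) balanced over  *)
(* C (a subset of A acting by multiplication), given by the universal       *)
(* property: t : A -> A -> T is R-bilinear and C-balanced on M x N, and     *)
(* every such map factors uniquely through an R-linear map on T.            *)
Definition balanced_bilinear (R : comPzRingType) (A : pzRingType)
    (sc : R -> A -> A) (M N C : A -> Prop) (W : lmodType R) (f : A -> A -> W) : Prop :=
  [/\ forall m m' n, M m -> M m' -> N n -> f (m + m') n = f m n + f m' n,
      forall m n n', M m -> N n -> N n' -> f m (n + n') = f m n + f m n',
      forall a m n, M m -> N n -> f (sc a m) n = a *: f m n,
      forall a m n, M m -> N n -> f m (sc a n) = a *: f m n &
      forall m c n, M m -> C c -> N n -> f (m * c) n = f m (c * n)].

Definition is_tensor_product (R : comPzRingType) (A : pzRingType)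
    (sc : R -> A -> A) (M N C : A -> Prop) (T : lmodType R) (t : A -> A -> T) : Prop :=
  balanced_bilinear sc M N C t /\
  forall (W : lmodType R) (f : A -> A -> W), balanced_bilinear sc M N C f ->
    exists g : T -> W,
      [/\ forall x y, g (x + y) = g x + g y,
          forall a x, g (a *: x) = a *: g x,
          forall m n, M m -> N n -> g (t m n) = f m n &
          forall g' : T -> W, (forall x y, g' (x + y) = g' x + g' y) ->
            (forall a x, g' (a *: x) = a *: g' x) ->
            (forall m n, M m -> N n -> g' (t m n) = f m n) -> g' =1 g].

(* Main.v *)
Require Import Defs.
From HB Require Import structures.
From mathcomp Require Import all_boot all_algebra.
From mathcomp Require Import boolp.
From Stdlib Require Import ProofIrrelevance.
Set Implicit Arguments. Unset Strict Implicit. Unset Printing Implicit Defensive.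
Import GRing.Theory.
Local Open Scope ring_scope.

Section AlgAsMod.
Variables (R : comPzRingType) (A : pzRingType) (sc : R -> A -> A) (hA : is_Ralg sc).
Definition Aw (_ : is_Ralg sc) : Type := A.
HB.instance Definition _ := GRing.Zmodule.on (Aw hA).
Lemma Aw_scalerA a b (v : (Aw hA)) : sc a (sc b v) = sc (a * b) v.
Proof. by case: hA. Qed.
Lemma Aw_scale1r : left_id 1 (sc : R -> (Aw hA) -> (Aw hA)).
Proof. by case: hA. Qed.
Lemma Aw_scalerDr : right_distributive (sc : R -> (Aw hA) -> (Aw hA)) +%R.
Proof. by case: hA. Qed.
Lemma Aw_scalerDl (v : (Aw hA)) : {morph (sc^~ v : R -> (Aw hA)) : a b / a + b}.
Proof. by move=> a b; case: hA. Qed.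
HB.instance Definition _ := GRing.Zmodule_isLmodule.Build R (Aw hA) Aw_scalerA Aw_scale1r Aw_scalerDr Aw_scalerDl.
Lemma AwZ a (x : (Aw hA)) : a *: x = sc a x. Proof. by []. Qed.
End AlgAsMod.

Record subpred (R : pzRingType) (U : lmodType R) := SubPred {
  sp :> U -> Prop;
  sp0 : sp 0;
  spD : forall x y, sp x -> sp y -> sp (x + y);
  spZ : forall a x, sp x -> sp (a *: x) }.

Section Quot.
Variables (R : pzRingType) (U : lmodType R) (X : subpred U).
Let X0 := sp0 X. Let XD := @spD _ _ X. Let XZ := @spZ _ _ X.
Lemma XN x : X x -> X (- x). Proof. by move=> h; rewrite -scaleN1r; apply: XZ. Qed.
Lemma XB x y : X x -> X y -> X (x - y). Proof. by move=> h1 h2; apply: XD => //; apply: XN. Qed.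

Definition Qt := {C : U -> Prop | exists x, C = fun y => X (y - x)}.
HB.instance Definition _ := gen_eqMixin Qt.
HB.instance Definition _ := gen_choiceMixin Qt.
Definition cls (x : U) : Qt := exist _ (fun y => X (y - x)) (ex_intro _ x erefl).
Definition rep (C : Qt) : U := proj1_sig (cid (proj2_sig C)).
Lemma repK C : cls (rep C) = C.
Proof.
case: C => C h; rewrite /rep /=; case: (cid _) => x hx /=.
apply: eq_sig_hprop => /=; first by move=> ?; apply: proof_irrelevance.
by rewrite hx.
Qed.
Lemma eq_cls x y : X (x - y) -> cls x = cls y.
Proof.
move=> h; apply: eq_sig_hprop => /=; first by move=> ?; apply: proof_irrelevance.
apply: funext => z; apply: propext; split => hz.
  by have := XD hz h; rewrite addrA subrK.
by have := XB hz h; rewrite opprB addrA subrK.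
Qed.
Lemma cls_eq x y : cls x = cls y -> X (x - y).
Proof.
move=> /(congr1 (@proj1_sig _ _)) /= /(congr1 (fun f => f x)) /= <-.
by rewrite subrr.
Qed.
Lemma cls_rep x : X (rep (cls x) - x).
Proof. by apply: cls_eq; rewrite repK. Qed.

Definition qadd (C D : Qt) := cls (rep C + rep D).
Definition qopp (C : Qt) := cls (- rep C).
Definition qzero := cls 0.
Definition qscale (a : R) (C : Qt) := cls (a *: rep C).
Lemma qaddE x y : qadd (cls x) (cls y) = cls (x + y).
Proof.
apply: eq_cls; have := XD (cls_rep x) (cls_rep y).
by congr (sp X _); rewrite opprD !addrA; congr (_ + _); rewrite addrAC -!addrA; congr (_ + _); rewrite addrC.
Qed.
Lemma qoppE x : qopp (cls x) = cls (- x).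
Proof. apply: eq_cls; have := XN (cls_rep x); by rewrite opprB opprK addrC. Qed.
Lemma qscaleE a x : qscale a (cls x) = cls (a *: x).
Proof. apply: eq_cls; have := XZ a (cls_rep x); by rewrite scalerBr. Qed.
Lemma qind (P : Qt -> Prop) : (forall x, P (cls x)) -> forall C, P C.
Proof. by move=> h C; rewrite -(repK C). Qed.

Lemma qaddA : associative qadd.
Proof. by elim/qind=> x; elim/qind=> y; elim/qind=> z; rewrite !qaddE addrA. Qed.
Lemma qaddC : commutative qadd.
Proof. by elim/qind=> x; elim/qind=> y; rewrite !qaddE addrC. Qed.
Lemma qadd0 : left_id qzero qadd.
Proof. by elim/qind=> x; rewrite qaddE add0r. Qed.
Lemma qaddN : left_inverse qzero qopp qadd.
Proof. by elim/qind=> x; rewrite qoppE qaddE addNr. Qed.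
HB.instance Definition _ := GRing.isZmodule.Build Qt qaddA qaddC qadd0 qaddN.
Lemma qaddE2 x y : cls x + cls y = cls (x + y). Proof. exact: qaddE. Qed.
Lemma qscaleA a b (v : Qt) : qscale a (qscale b v) = qscale (a * b) v.
Proof. by elim/qind: v => x; rewrite !qscaleE scalerA. Qed.
Lemma qscale1 : left_id 1 qscale.
Proof. by elim/qind=> x; rewrite qscaleE scale1r. Qed.
Lemma qscaleDr : right_distributive qscale +%R.
Proof.
move=> a; elim/qind=> x; elim/qind=> y.
change (qscale a (qadd (cls x) (cls y)) = qadd (qscale a (cls x)) (qscale a (cls y))).
by rewrite qaddE !qscaleE qaddE scalerDr. Qed.
Lemma qscaleDl (v : Qt) : {morph qscale^~ v : a b / a + b}.
Proof. elim/qind: v => x a b.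
change (qscale (a + b) (cls x) = qadd (qscale a (cls x)) (qscale b (cls x))).
by rewrite !qscaleE qaddE scalerDl. Qed.
HB.instance Definition _ := GRing.Zmodule_isLmodule.Build R Qt qscaleA qscale1 qscaleDr qscaleDl.

End Quot.

Section TI.
Variables (R : comPzRingType) (U : lmodType R) (X : subpred U).
Lemma tensor_image (A : pzRingType) (sc : R -> A -> A) (M N C : A -> Prop)
   (T : lmodType R) (t : A -> A -> T) (g : T -> U) :
  is_tensor_product sc M N C t ->
  (forall x y, g (x + y) = g x + g y) -> (forall a x, g (a *: x) = a *: g x) ->
  (forall m n, M m -> N n -> X (g (t m n))) -> forall y, X (g y).
Proof.
move=> [_ hu] gD gZ gX y.
have bb : balanced_bilinear sc M N C (fun _ _ => (0 : Qt X)).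
  by split=> *; rewrite ?addr0 ?scaler0.
have [h [_ _ _ huniq]] := hu (Qt X) _ bb.
have e1 := huniq (fun z => cls X (g z)).
have e0 := huniq (fun _ => 0).
have E0 : (fun _ : T => (0 : Qt X)) =1 h.
  apply: huniq => *; by rewrite ?addr0 ?scaler0.
have E1 : (fun z => cls X (g z)) =1 h.
  apply: huniq.
  - by move=> z w; rewrite gD; symmetry; apply: qaddE2.
  - by move=> a z; rewrite gZ; symmetry; apply: qscaleE.
  - by move=> m n hm hn; apply: eq_cls => //; rewrite subr0; apply: gX.
have : cls X (g y) = cls X 0 by rewrite (E1 y) -(E0 y).
by move/cls_eq; rewrite subr0.
Qed.
End TI.

Section Leavitt.
Variables (R : comPzRingType) (E0 E1 : countType) (rg sr : E1 -> E0)
  (A : pzRingType) (sc : R -> A -> A) (P : E0 -> A) (S Ss : E1 -> A).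
Hypotheses (hA : is_Ralg sc) (hf : leavitt_family rg sr P S Ss).

Local Notation valid := (is_fpath rg sr).
Definition pS (es : seq E1) : A := \prod_(e <- es) S e.
Definition pSs (es : seq E1) : A := \prod_(e <- rev es) Ss e.
Definition send (p : Defs.fpath E0 E1) : E0 := last p.1 (map sr p.2).
Definition Np (p : Defs.fpath E0 E1) := P p.1 * pS p.2.
Definition Ns (p : Defs.fpath E0 E1) := pSs p.2 * P p.1.

Lemma pS_nil : pS [::] = 1. Proof. by rewrite /pS big_nil. Qed.
Lemma pSs_nil : pSs [::] = 1. Proof. by rewrite /pSs big_nil. Qed.
Lemma pS_cons e es : pS (e :: es) = S e * pS es. Proof. by rewrite /pS big_cons. Qed.
Lemma pSs_cons e es : pSs (e :: es) = pSs es * Ss e.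
Proof. by rewrite /pSs rev_cons big_rcons. Qed.
Lemma pS_cat es fs : pS (es ++ fs) = pS es * pS fs. Proof. by rewrite /pS big_cat. Qed.
Lemma pSs_cat es fs : pSs (es ++ fs) = pSs fs * pSs es.
Proof. by rewrite /pSs rev_cat big_cat. Qed.

Lemma PPl w v X : P w * (P v * X) = if w == v then P v * X else 0.
Proof.
case: (eqVneq w v) => [->|h]; rewrite mulrA; first by rewrite (lf_idem hf).
by rewrite (lf_orth hf h) mul0r.
Qed.
Lemma PPr v w X : X * P v * P w = if v == w then X * P v else 0.
Proof.
case: (eqVneq v w) => [->|h]; rewrite -mulrA; first by rewrite (lf_idem hf).
by rewrite (lf_orth hf h) mulr0.
Qed.

Lemma PP0 v w : P v * P w = if w == v then P v else 0.
Proof.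
case: (eqVneq w v) => [->|h]; first by rewrite (lf_idem hf).
by rewrite (lf_orth hf) // eq_sym.
Qed.

Lemma valid_tail v e es : valid (v, e :: es) -> valid (sr e, es) /\ v = rg e.
Proof. by rewrite /is_fpath /= => /andP [/eqP -> h]; split => //; case: es h. Qed.

Lemma spathE p : valid p -> s_path P S p = Np p.
Proof.
case: p => v [|e es] /=; rewrite /s_path /Np /=; first by rewrite pS_nil mulr1.
by move=> /valid_tail [_ ->]; rewrite -/(pS _) pS_cons mulrA (lf_L1a hf).
Qed.
Lemma sstarE p : valid p -> s_pathstar P Ss p = Ns p.
Proof.
case: p => v [|e es] /=; rewrite /s_pathstar /Ns /=; first by rewrite pSs_nil mul1r.
by move=> /valid_tail [_ ->]; rewrite -/(pSs _) pSs_cons -mulrA (lf_L1d hf).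
Qed.

Lemma PR v es w : valid (v, es) ->
  P v * pS es * P w = if w == send (v, es) then P v * pS es else 0.
Proof.
elim: es v => [|e es IH] v.
  by move=> _; rewrite pS_nil mulr1 /send /= PP0.
move=> /valid_tail [hv ->].
have IH' := IH _ hv.
have -> : P (rg e) * pS (e :: es) * P w = S e * (P (sr e) * pS es * P w).
  by rewrite pS_cons !mulrA (lf_L1a hf) (lf_L1b hf).
have -> : send (rg e, e :: es) = send (sr e, es) by [].
rewrite IH'; case: eqP => _; last by rewrite mulr0.
by rewrite pS_cons !mulrA (lf_L1a hf) (lf_L1b hf).
Qed.

Lemma SL w v es : valid (v, es) ->
  P w * (pSs es * P v) = if w == send (v, es) then pSs es * P v else 0.
Proof.
elim: es v => [|e es IH] v.
  by move=> _; rewrite pSs_nil mul1r /send /= PP0 eq_sym; case: eqP => // ->.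
move=> /valid_tail [hv ->].
have IH' := IH _ hv.
have E : forall Y, Y * (pSs (e :: es) * P (rg e)) = Y * (pSs es * P (sr e)) * Ss e.
  by move=> Y; rewrite pSs_cons -!mulrA (lf_L1d hf) (lf_L1c hf).
have -> : send (rg e, e :: es) = send (sr e, es) by [].
rewrite E IH'; case: eqP => _; last by rewrite mul0r.
by rewrite pSs_cons -!mulrA (lf_L1d hf) (lf_L1c hf).
Qed.

Lemma valid_cat v es w fs : valid (v, es) -> valid (w, fs) -> send (v, es) = w ->
  valid (v, es ++ fs).
Proof.
case: es => [|e es] /=; first by rewrite /send /= => _ h hv; rewrite hv.
rewrite /is_fpath /= => /andP [-> hp] hw; rewrite /send /= => hs.
rewrite cat_path hp /=.
case: fs hw => [|f fs] //= /andP [/eqP hw ->]; rewrite andbT.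
by rewrite -hw -hs (last_map sr).
Qed.

Definition Out (x : A) := x = 0 \/ (exists c, valid c /\ x = Np c) \/ (exists d, valid d /\ x = Ns d).

Lemma MID qs : forall v w as_, valid (v, qs) -> valid (w, as_) ->
  Out (pSs qs * P v * (P w * pS as_)).
Proof.
elim: qs => [|e qs IH] v w as_ hq ha.
  rewrite pSs_nil mul1r PPl; case: eqP => [_|_]; last by left.
  by right; left; exists (w, as_).
rewrite -mulrA PPl; case: eqP => [hvw|_]; last by left; rewrite mulr0.
subst w.
case: as_ ha => [|f as_] ha.
  by right; right; exists (v, e :: qs) => //; rewrite pS_nil mulr1.
have [hq' hv] := valid_tail hq.
have [ha' hv'] := valid_tail ha.
rewrite pS_cons pSs_cons hv' [P (rg f) * _]mulrA (lf_L1a hf) mulrA -[pSs qs * Ss e * S f]mulrA (lf_L2 hf).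
case: eqP => [hef|_]; last by left; rewrite mulr0 mul0r.
subst f.
have -> : pSs qs * P (sr e) * pS as_ = pSs qs * P (sr e) * (P (sr e) * pS as_).
  by rewrite mulrA -(mulrA _ (P _) (P _)) (lf_idem hf).
exact: IH.
Qed.

Lemma KLn p q a b : valid p -> valid q -> valid a -> valid b ->
  Np p * Ns q * (Np a * Ns b) = 0 \/
  exists p' b', [/\ valid p', valid b', p'.1 = p.1, b'.1 = b.1 &
     Np p * Ns q * (Np a * Ns b) = Np p' * Ns b'].
Proof.
move=> hp hq ha hb.
have -> : Np p * Ns q * (Np a * Ns b) = Np p * (Ns q * Np a) * Ns b by rewrite !mulrA.
case: q hq => v qs hq; case: a ha => w as_ ha.
have [->|[[c [hc ->]]|[d [hd ->]]]] := MID hq ha.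
- by left; rewrite mulr0 mul0r.
- case: p hp => p1 ps hp; case: c hc => c1 cs hc.
  rewrite /Np /= mulrA PR //; case: eqP => [hs|_]; last by left; rewrite !mul0r.
  right; exists (p1, ps ++ cs), b; split => //; first exact: valid_cat hp hc _.
  by rewrite pS_cat !mulrA.
- case: b hb => b1 bs hb; case: d hd => d1 ds hd.
  rewrite /Ns /= -mulrA -mulrA SL //; case: eqP => [hs|_]; last by left; rewrite !mulr0.
  right; exists p, (b1, bs ++ ds); split => //; first exact: valid_cat hb hd _.
  by rewrite pSs_cat !mulrA.
Qed.


Definition mono (p q : Defs.fpath E0 E1) := s_path P S p * s_pathstar P Ss q.

Lemma KL p q a b : valid p -> valid q -> valid a -> valid b ->
  mono p q * mono a b = 0 \/
  exists p' b', [/\ valid p', valid b', p'.1 = p.1, b'.1 = b.1 &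
     mono p q * mono a b = mono p' b'].
Proof.
move=> hp hq ha hb; rewrite /mono !spathE // !sstarE //.
have [->|[p' [b' [hp' hb' e1 e2 ->]]]] := KLn hp hq ha hb; first by left.
by right; exists p', b'; split => //; rewrite spathE // sstarE.
Qed.

Lemma rspan_ind (X Z : A -> Prop) : Z 0 -> (forall x y, Z x -> Z y -> Z (x + y)) ->
  (forall a x, Z x -> Z (sc a x)) -> (forall x, X x -> Z x) ->
  forall x, rspan sc X x -> Z x.
Proof. move=> Z0 ZD ZZ ZX x; elim => //; auto. Qed.

Lemma rspan_mul (X Y Z : A -> Prop) : Z 0 -> (forall x y, Z x -> Z y -> Z (x + y)) ->
  (forall a x, Z x -> Z (sc a x)) -> (forall x y, X x -> Y y -> Z (x * y)) ->
  forall x y, rspan sc X x -> rspan sc Y y -> Z (x * y).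
Proof.
move=> Z0 ZD ZZ ZXY x y hx hy; elim: hx.
- by rewrite mul0r.
- move=> x0 hx0; elim: hy.
  + by rewrite mulr0.
  + by move=> y0 hy0; apply: ZXY.
  + by move=> y1 y2 _ h1 _ h2; rewrite mulrDr; apply: ZD.
  + by move=> a y0 _ h; rewrite -(ralg_scaleAr hA); apply: ZZ.
- by move=> x1 x2 _ h1 _ h2; rewrite mulrDl; apply: ZD.
- by move=> a x0 _ h; rewrite -(ralg_scaleAl hA); apply: ZZ.
Qed.

Lemma mono_mul (Q1 Q2 Q3 : Defs.fpath E0 E1 -> Defs.fpath E0 E1 -> Prop) :
  (forall p q a b p' b', Q1 p q -> Q2 a b -> p'.1 = p.1 -> b'.1 = b.1 -> Q3 p' b') ->
  forall x y, mono_span rg sr sc P S Ss Q1 x -> mono_span rg sr sc P S Ss Q2 y ->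
  mono_span rg sr sc P S Ss Q3 (x * y).
Proof.
move=> hQ; apply: rspan_mul.
- exact: rspan0.
- exact: rspanD.
- exact: rspanZ.
move=> x y [p [q [hp hq h1 ->]]] [a [b [ha hb h2 ->]]].
have [->|[p' [b' [hp' hb' e1 e2 ->]]]] := KL hp hq ha hb; first exact: rspan0.
apply: rspan_base; exists p', b'; split => //; exact: hQ h1 h2 e1 e2.
Qed.

Lemma mono_sub (Q1 Q2 : Defs.fpath E0 E1 -> Defs.fpath E0 E1 -> Prop) :
  (forall p q, Q1 p q -> Q2 p q) ->
  forall x, mono_span rg sr sc P S Ss Q1 x -> mono_span rg sr sc P S Ss Q2 x.
Proof.
move=> hQ; apply: rspan_ind.
- exact: rspan0.
- exact: rspanD.
- exact: rspanZ.
move=> x [p [q [hp hq h1 ->]]]; apply: rspan_base; exists p, q; split => //; exact: hQ.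
Qed.

Lemma gen_prod (F : E1 -> A) : (forall e, gen_alg sc P S Ss (F e)) ->
  forall s, s != [::] -> gen_alg sc P S Ss (\prod_(e <- s) F e).
Proof.
move=> hF; elim => [//|e s IH] _; rewrite big_cons.
case: s IH => [|f s] IH; first by rewrite big_nil mulr1.
by apply: gen_M => //; apply: IH.
Qed.

Lemma mono_gen p q : gen_alg sc P S Ss (mono p q).
Proof.
apply: gen_M.
  case: p => v [|e es]; rewrite /s_path /=; first exact: gen_P.
  by apply: gen_prod => // x; apply: gen_S.
case: q => v [|e es]; rewrite /s_pathstar /=; first exact: gen_P.
apply: gen_prod => [x|]; first exact: gen_Ss.
by rewrite rev_cons; case: (rev es).
Qed.

Lemma span_gen Q x : mono_span rg sr sc P S Ss Q x -> gen_alg sc P S Ss x.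
Proof.
apply: rspan_ind.
- exact: gen_0.
- exact: gen_D.
- exact: gen_Z.
by move=> y [p [q [_ _ _ ->]]]; apply: mono_gen.
Qed.

Lemma Pv_mono v : P v = mono (v, [::]) (v, [::]).
Proof. by rewrite /mono /s_path /s_pathstar /= (lf_idem hf). Qed.

Lemma gen_span x : gen_alg sc P S Ss x -> mono_span rg sr sc P S Ss (fun _ _ => True) x.
Proof.
elim.
- by move=> v; apply: rspan_base; exists (v, [::]), (v, [::]); split => //; apply: Pv_mono.
- move=> e; apply: rspan_base; exists (rg e, [:: e]), (sr e, [::]); split => //.
    by rewrite /is_fpath /= eqxx.
  by rewrite /mono /s_path /s_pathstar /= big_cons big_nil mulr1 (lf_L1b hf).
- move=> e; apply: rspan_base; exists (sr e, [::]), (rg e, [:: e]); split => //.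
    by rewrite /is_fpath /= eqxx.
  by rewrite /mono /s_path /s_pathstar /= big_cons big_nil mulr1 (lf_L1c hf).
- exact: rspan0.
- by move=> x1 x2 _ h1 _ h2; apply: rspanD.
- by move=> a x0 _ h; apply: rspanZ.
- move=> x1 x2 _ h1 _ h2; apply: (mono_mul _ h1 h2) => //.
Qed.

Lemma mono_Pr p q : valid q -> mono p q * P q.1 = mono p q.
Proof. by move=> hq; rewrite /mono sstarE // /Ns -!mulrA (lf_idem hf). Qed.
Lemma mono_Pl p q : valid p -> P p.1 * mono p q = mono p q.
Proof. by move=> hp; rewrite /mono spathE // /Np !mulrA (lf_idem hf). Qed.

End Leavitt.

Theorem theorem3p1
  (R : comPzRingType) (E0 E1 : countType) (rg sr : E1 -> E0)
  (A : pzRingType) (sc : R -> A -> A) (P : E0 -> A) (S Ss : E1 -> A)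
  (hA : is_Ralg sc) (hfam : leavitt_family rg sr P S Ss)
  (huniv : leavitt_universal rg sr sc P S Ss)
  (V : E0 -> Prop) :
  let L := gen_alg sc P S Ss in
  let M := mono_span rg sr sc P S Ss (fun mu nu => V (fpath_rg mu)) in
  let Ms := mono_span rg sr sc P S Ss (fun mu nu => V (fpath_rg nu)) in
  let MMs := prodspan sc M Ms in
  let MsM := prodspan sc Ms M in
  (* (1) *)
  is_subalgebra_of sc L MMs /\
  (* (2) *)
  ((forall x, MMs x <->
      mono_span rg sr sc P S Ss (fun mu nu => V (fpath_rg mu) /\ V (fpath_rg nu)) x)
   /\ is_ideal_of sc L MsM /\ (forall x, MMs x -> MsM x)) /\
  (* (3) *)
  ((forall b m c, MMs b -> M m -> MsM c -> M (b * m) /\ M (m * c)) /\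
   (forall c n b, MsM c -> Ms n -> MMs b -> Ms (c * n) /\ Ms (n * b))) /\
  (* (4) *)
  (forall (T : lmodType R) (t : A -> A -> T), is_tensor_product sc M Ms MsM t ->
   forall (T' : lmodType R) (t' : A -> A -> T'), is_tensor_product sc Ms M MMs t' ->
   exists (Psi : T -> A) (Phi : T' -> A),
     [/\ (* Psi : M (x)_{M*M} M* -> MM*, an R-linear MM*-bimodule map, Psi(m(x)n) = mn, onto *)
         [/\ forall x y, Psi (x + y) = Psi x + Psi y,
             forall a x, Psi (a *: x) = sc a (Psi x),
             forall m n, M m -> Ms n -> Psi (t m n) = m * n,
             forall x, MMs x <-> exists y, Psi y = x &
             forall b m n, MMs b -> M m -> Ms n ->
               Psi (t (b * m) n) = b * Psi (t m n) /\ Psi (t m (n * b)) = Psi (t m n) * b],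
         (* Phi : M* (x)_{MM*} M -> M*M, an R-linear M*M-bimodule map, Phi(n(x)m) = nm, onto *)
         [/\ forall x y, Phi (x + y) = Phi x + Phi y,
             forall a x, Phi (a *: x) = sc a (Phi x),
             forall n m, Ms n -> M m -> Phi (t' n m) = n * m,
             forall x, MsM x <-> exists y, Phi y = x &
             forall c n m, MsM c -> Ms n -> M m ->
               Phi (t' (c * n) m) = c * Phi (t' n m) /\ Phi (t' n (m * c)) = Phi (t' n m) * c],
         (* Morita context identities *)
         forall m m' n, M m -> M m' -> Ms n -> m * Phi (t' n m') = Psi (t m n) * m' &
         forall n n' m, Ms n -> Ms n' -> M m -> n * Psi (t m n') = Phi (t' n m) * n']).
Proof.
move=> L M Ms MMs MsM; have hf := hfam.
set MV := mono_span rg sr sc P S Ss (fun mu nu => V (fpath_rg mu) /\ V (fpath_rg nu)).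
have LAll : forall x, L x -> mono_span rg sr sc P S Ss (fun _ _ => True) x.
  by move=> x; apply: gen_span.
have spanL : forall Q x, mono_span rg sr sc P S Ss Q x -> L x.
  by move=> Q x; apply: span_gen.
have MM : forall x y, M x -> M y -> M (x * y).
  apply: (mono_mul hA hf) => p q a b p' b' h1 _ e1 _; by rewrite /fpath_rg e1.
have MLM : forall x y, M x -> L y -> M (x * y).
  move=> x y hx /LAll hy; move: hx hy; apply: (mono_mul hA hf).
  by move=> p q a b p' b' h1 _ e1 _; rewrite /fpath_rg e1.
have LMs : forall x y, L x -> Ms y -> Ms (x * y).
  move=> x y /LAll; apply: (mono_mul hA hf).
  by move=> p q a b p' b' _ h2 _ e2; rewrite /fpath_rg e2.
have MsMs : forall x y, Ms x -> Ms y -> Ms (x * y).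
  apply: (mono_mul hA hf) => p q a b p' b' _ h2 _ e2; by rewrite /fpath_rg e2.
have MMsV : forall x y, M x -> Ms y -> MV (x * y).
  apply: (mono_mul hA hf) => p q a b p' b' h1 h2 e1 e2; by rewrite /fpath_rg e1 e2.
have MVV : forall x y, MV x -> MV y -> MV (x * y).
  apply: (mono_mul hA hf) => p q a b p' b' [h1 _] [_ h2] e1 e2; by rewrite /fpath_rg e1 e2.
have MV_M : forall x, MV x -> M x by apply: mono_sub => p q [].
have MV_Ms : forall x, MV x -> Ms x by apply: mono_sub => p q [].
have PMs : forall v, V v -> Ms (P v).
  move=> v hv; apply: rspan_base; exists (v, [::]), (v, [::]); split => //.
  exact: (Pv_mono hf).
have MMs_MV : forall x, MMs x <-> MV x.
  move=> x; split.
    apply: (rspan_ind (Z := MV)); [exact: rspan0|exact: rspanD|exact: rspanZ|].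
    by move=> z [m [n [hm hn ->]]]; apply: MMsV.
  apply: (rspan_ind (Z := MMs)); [exact: rspan0|exact: rspanD|exact: rspanZ|].
  move=> z [mu [nu [hmu hnu [h1 h2] ->]]].
  have E := mono_Pr hf mu hnu; rewrite /mono in E.
  apply: rspan_base; exists (s_path P S mu * s_pathstar P Ss nu), (P nu.1); split => //.
    by apply: rspan_base; exists mu, nu.
  by apply: PMs.
have MsM_L : forall x, MsM x -> L x.
  apply: (rspan_ind (Z := L)); [exact: gen_0|exact: gen_D|exact: gen_Z|].
  by move=> z [n [m [hn hm ->]]]; apply: gen_M; [apply: (spanL _ _ hn)|apply: (spanL _ _ hm)].
have MMs_L : forall x, MMs x -> L x by move=> x /MMs_MV; apply: spanL.
split.
  split; [exact: MMs_L|exact: rspan0|exact: rspanD|exact: rspanZ|].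
  by move=> x y /MMs_MV hx /MMs_MV hy; apply/MMs_MV; apply: MVV.
split.
  split; first exact: MMs_MV.
  split.
    split; [exact: MsM_L|exact: rspan0|exact: rspanD|exact: rspanZ|].
    move=> x y hx; move: y; apply: (rspan_ind (Z := fun y => MsM (x * y) /\ MsM (y * x))).
    - by rewrite mulr0 mul0r; split; apply: rspan0.
    - by move=> y1 y2 [h1 h1'] [h2 h2']; rewrite mulrDr mulrDl; split; apply: rspanD.
    - move=> a y [h h']; rewrite -(ralg_scaleAr hA) -(ralg_scaleAl hA).
      by split; apply: rspanZ.
    - move=> z [n [m [hn hm ->]]]; split.
        by rewrite mulrA; apply: rspan_base; exists (x * n), m; split => //; apply: LMs.
      by rewrite -mulrA; apply: rspan_base; exists n, (m * x); split => //; apply: MLM.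
  move=> x /MMs_MV; apply: (rspan_ind (Z := MsM)); [exact: rspan0|exact: rspanD|exact: rspanZ|].
  move=> z [mu [nu [hmu hnu [h1 h2] ->]]].
  have E := mono_Pl hf nu hmu; rewrite /mono in E.
  apply: rspan_base; exists (P mu.1), (s_path P S mu * s_pathstar P Ss nu); split => //.
    by apply: PMs.
  by apply: rspan_base; exists mu, nu.
split.
  split => b m c hb hm hc; split.
  - by apply: MM => //; apply: MV_M; apply/MMs_MV.
  - by apply: MLM => //; apply: MsM_L.
  - by apply: LMs => //; apply: MsM_L.
  - by apply: MsMs => //; apply: MV_Ms; apply/MMs_MV.
move=> T t ht T' t' ht'.
have bb1 : balanced_bilinear sc M Ms MsM (fun m n => (m * n : Aw hA)).
  split.
  - by move=> m m' n _ _ _; rewrite mulrDl.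
  - by move=> m n n' _ _ _; rewrite mulrDr.
  - by move=> a m n _ _; rewrite AwZ (ralg_scaleAl hA).
  - by move=> a m n _ _; rewrite AwZ (ralg_scaleAr hA).
  - by move=> m c n _ _ _; rewrite mulrA.
have bb2 : balanced_bilinear sc Ms M MMs (fun m n => (m * n : Aw hA)).
  split.
  - by move=> m m' n _ _ _; rewrite mulrDl.
  - by move=> m n n' _ _ _; rewrite mulrDr.
  - by move=> a m n _ _; rewrite AwZ (ralg_scaleAl hA).
  - by move=> a m n _ _; rewrite AwZ (ralg_scaleAr hA).
  - by move=> m c n _ _ _; rewrite mulrA.
have [g [gD gZ gt _]] := ht.2 _ _ bb1.
have [h [hD hZ ht2 _]] := ht'.2 _ _ bb2.
have g0 : g 0 = 0 by apply: (addrI (g 0)); rewrite -gD !addr0.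
have h0 : h 0 = 0 by apply: (addrI (h 0)); rewrite -hD !addr0.
pose XMMs := @SubPred _ (Aw hA) MMs (rspan0 _ _) (fun x y => @rspanD _ _ _ _ x y)
   (fun a x => @rspanZ _ _ _ _ a x).
pose XMsM := @SubPred _ (Aw hA) MsM (rspan0 _ _) (fun x y => @rspanD _ _ _ _ x y)
   (fun a x => @rspanZ _ _ _ _ a x).
exists g, h; split.
- split => //.
  + move=> x; split.
      apply: (rspan_ind (Z := fun x => exists y, g y = x)).
      * by exists 0.
      * by move=> x1 x2 [y1 <-] [y2 <-]; exists (y1 + y2); rewrite gD.
      * by move=> a x1 [y1 <-]; exists (a *: y1); rewrite gZ.
      * by move=> z [m [n [hm hn ->]]]; exists (t m n); rewrite gt.
    move=> [y <-]; apply: (tensor_image (X := XMMs) ht gD gZ).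
    by move=> m n hm hn; rewrite gt //; apply: rspan_base; exists m, n.
  + move=> b m n hb hm hn; rewrite !gt //.
    * by split; rewrite mulrA.
    * by apply: MsMs => //; apply: MV_Ms; apply/MMs_MV.
    * by apply: MM => //; apply: MV_M; apply/MMs_MV.
- split => //.
  + move=> x; split.
      apply: (rspan_ind (Z := fun x => exists y, h y = x)).
      * by exists 0.
      * by move=> x1 x2 [y1 <-] [y2 <-]; exists (y1 + y2); rewrite hD.
      * by move=> a x1 [y1 <-]; exists (a *: y1); rewrite hZ.
      * by move=> z [m [n [hm hn ->]]]; exists (t' m n); rewrite ht2.
    move=> [y <-]; apply: (tensor_image (X := XMsM) ht' hD hZ).
    by move=> m n hm hn; rewrite ht2 //; apply: rspan_base; exists m, n.
  + move=> c n m hc hn hm; rewrite !ht2 //.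
    * by split; rewrite mulrA.
    * by apply: MLM => //; apply: MsM_L.
    * by apply: LMs => //; apply: MsM_L.
- by move=> m m' n hm hm' hn; rewrite ht2 // gt // mulrA.
- by move=> n n' m hn hn' hm; rewrite gt // ht2 // mulrA.
Qed.
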